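(* With the setting below, the operator $\bar\pi:\Omega^1\to\mathfrak{X}_{\mathcal{A}}(\Lambda_0)$ defined by $\bar\pi(\alpha_{\mathbf{p}})(\gamma)=\Phi_\gamma^{-1}\pi_1(\alpha_{\mathbf{p}_\gamma})$, which explicitly is $$\bar\pi(\alpha_{\mathbf{p}})(\gamma)=D_s^{-1}(\mathbf{k}_\gamma\mathbf{p}_\gamma')\mathbf{T}_\gamma+\mathbf{p}_\gamma'\mathbf{N}_\gamma,$$ is a Hamiltonian operator: it is skew-symmetric, i.e. $\alpha_{\mathbf{q}}(\bar\pi\alpha_{\mathbf{p}})=-\alpha_{\mathbf{p}}(\bar\pi\alpha_{\mathbf{q}})$; its image $\bar\pi\Omega^1$ is a Lie subalgebra of $\mathfrak{X}_{\mathcal{A}}(\Lambda_0)$; and the $2$-form $\omega(\bar\pi\alpha,\bar\pi\beta)=\beta(\bar\pi\alpha)$ is closed, i.e. $d\omega=0$, where $d\omega(\xi_1,\xi_2,\xi_3)=\sum_{\mathrm{cyclic}}\big(\xi_1\,\omega(\xi_2,\xi_3)-\omega([\xi_1,\xi_2],\xi_3)\big)$ for $\xi_i\in\bar\pi\Omega^1$.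
   Context: $\Lambda_0$ is the space of arc-length parametrized plane curves; for $\gamma\in\Lambda_0$, $\{\mathbf{T}_\gamma,\mathbf{N}_\gamma\}$ is its Frenet frame and $\mathbf{k}_\gamma$ its curvature ($\mathbf{T}'=\mathbf{k}\mathbf{N}$, $\mathbf{N}'=-\mathbf{k}\mathbf{T}$; $'=D_s$ is the arc-length derivative, $D_s^{-1}$ a formal antiderivative). $\mathcal{P}=\mathbb{R}[k^{(m)}:m\in\mathbb{N}]$; $\mathcal{A}$ is the algebra of scalar fields $\mathbf{f}$ on $\Lambda_0$ with $\mathbf{f}_\gamma\in\mathcal{P}$ evaluated at $\mathbf{k}_\gamma$. $\mathfrak{X}_{\mathcal{A}}(\Lambda_0)=\{\mathbf{V}=\mathbf{f}\mathbf{T}+\mathbf{g}\mathbf{N}:\mathbf{f},\mathbf{g}\in\mathcal{A},\ \mathbf{f}_\gamma=D_s^{-1}(\mathbf{k}_\gamma\mathbf{g}_\gamma)\}$, a Lie algebra under $[\mathbf{V},\mathbf{W}](\gamma)=D_{\mathbf{V}_\gamma}\mathbf{W}_\gamma-D_{\mathbf{W}_\gamma}\mathbf{V}_\gamma$, where for $V=fT+gN$, $W=f_WT+g_WN$: $\varphi_V=g'+kf$, $\rho_V=f'-kg$, $V$ acts on $\mathcal{P}$ as the derivation with $V(k)=\varphi_V'-k\rho_V$, $V(h')=V(h)'+\rho_Vh'$, and $D_VW=(V(f_W)-g_W\varphi_V)T+(V(g_W)+f_W\varphi_V)N$. For $\mathbf{V}\in\mathfrak{X}_{\mathcal{A}}(\Lambda_0)$,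 $\mathbf{V}_\gamma(\mathbf{k}_\gamma)=\varphi_{\mathbf{V}_\gamma}'$. For $a\in\mathcal{P}$, $\partial_a=\sum_m a^{(m)}\partial/\partial k^{(m)}$; $\Phi_\gamma(\mathbf{V}_\gamma)=\partial_{\mathbf{V}_\gamma(\mathbf{k}_\gamma)}$, which is injective on $\mathfrak{X}_{\mathcal{A}}(\Lambda_0)$, and $\Phi_\gamma^{-1}$ denotes its inverse on the image. $\Omega^0=\{S=\int L\,ds: L=L(\mathbf{k},\mathbf{k}',\dots)\in\mathcal{A}\}$ (functionals modulo total derivatives), with $(\mathbf{V}S)(\gamma)=\int\mathbf{V}_\gamma(\mathbf{k}_\gamma)\frac{\delta L}{\delta\mathbf{k}_\gamma}ds$, $\frac{\delta L}{\delta k}=\sum_m(-D_s)^m\frac{\partial L}{\partial k^{(m)}}$. For $\mathbf{p}\in\mathcal{A}$, $\alpha_{\mathbf{p}}(\mathbf{V})=\int\mathbf{V}(\mathbf{k})\mathbf{p}\,ds\in\Omega^0$, and $\Omega^1=\{\alpha_{\mathbf{p}}:\mathbf{p}\in\mathcal{A},\ \exists\mathbf{p}_1\in\mathcal{A}\text{ with }\mathbf{p}_1'=\mathbf{k}\mathbf{p}'\}$. $\pi_1$ is the mKdV Hamiltonian operator $\pi_1(\alpha_p)=\partial_{\mathcal{D}(p)}$ with $\mathcal{D}=D_s^3+k'D_s^{-1}kD_s+k^2D_s$. *)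

(* Defs.v *)
From HB Require Import structures.
From mathcomp Require Import all_boot all_order all_algebra.
From mathcomp Require Import finmap.
From mathcomp.multinomials Require Import monalg.

Set Implicit Arguments.
Unset Strict Implicit.
Unset Printing Implicit Defensive.

Import Order.TTheory GRing.Theory Num.Theory.
Local Open Scope ring_scope.

(* The differential polynomial ring
   P = R[k^(m) : m in nat]  is the monoid algebra over the commutative
   monomials in the nat-indexed variables k^(0)=k, k^(1)=k', ...         *)

Section DiffAlg.
Variable R : realFieldType.

Definition P := {malg R[cmonom nat]}.

Definition kv (m : nat) : P := << ucm m >>.

(* The unique derivation of P sending each variable k^(i) to e i :
   h |-> sum_i (e i) * dh/dk^(i). *)
Definition der (e : nat -> P) (p : P) : P :=
  \sum_(m <- msupp p) p@_m *:
     \sum_(i <- finsupp (cmonom_val m))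
        ((cmonom_val m i)%:R * << divcm m (ucm i) >> * e i).

(* total arc-length derivative  D_s = ' : k^(i) |-> k^(i+1) *)
Definition Ds : P -> P := der (fun i => kv i.+1).

Definition pder (i : nat) : P -> P := der (fun j => (j == i)%:R).

Definition evder (a : P) : P -> P := der (fun m => iter m Ds a).

(* an upper bound for the order (1 + highest derivative occurring) *)
Definition ordb (p : P) : nat :=
  (\max_(m <- msupp p) \max_(i <- finsupp (cmonom_val m)) i.+1)%N.

Definition vard (L : P) : P :=
  \sum_(i < ordb L) iter i (fun h => - Ds h) (pder i L).

(* "int L ds = 0" in Omega^0 (functionals modulo total derivatives) *)
Definition totder (L : P) : Prop := exists h : P, L = Ds h.

(* vector fields V = f T + g N are pairs (f, g) *)
Definition Vf := (P * P)%type.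

(* membership in X_A(Lambda_0):  f = D_s^{-1}(k g) *)
Definition inXA (V : Vf) : Prop := Ds V.1 = kv 0 * V.2.

Definition phiV (V : Vf) : P := Ds V.2 + kv 0 * V.1.
Definition rhoV (V : Vf) : P := Ds V.1 - kv 0 * V.2.

(* V(k^(m)), from V(k) = phi' - k rho and V(h') = V(h)' + rho h' *)
Fixpoint Vk (V : Vf) (m : nat) : P :=
  match m with
  | 0 => Ds (phiV V) - kv 0 * rhoV V
  | m'.+1 => Ds (Vk V m') + rhoV V * kv m'.+1
  end.

Definition act (V : Vf) : P -> P := der (Vk V).

Definition covd (V W : Vf) : Vf :=
  (act V W.1 - W.2 * phiV V, act V W.2 + W.1 * phiV V).

Definition brk (V W : Vf) : Vf :=
  ((covd V W).1 - (covd W V).1, (covd V W).2 - (covd W V).2).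

(* Omega^1: alpha_p, together with a chosen antiderivative p1 of k p' *)
Definition inOmega1 (p p1 : P) : Prop := Ds p1 = kv 0 * Ds p.

(* representative of alpha_p(V) = int V(k) p ds *)
Definition alpha (p : P) (V : Vf) : P := act V (kv 0) * p.

(* (V S) for S = int L ds : representative of int V(k) dL/dk ds *)
Definition actF (V : Vf) (L : P) : P := act V (kv 0) * vard L.

(* pibar(alpha_p) = D_s^{-1}(k p') T + p' N, with D_s^{-1}(k p') = p1 *)
Definition pibar (p p1 : P) : Vf := (p1, Ds p).

Definition mKdVop (p p1 : P) : P :=
  Ds (Ds (Ds p)) + Ds (kv 0) * p1 + kv 0 ^+ 2 * Ds p.

(* the cyclic summand  xi1 omega(xi2,xi3) - omega([xi1,xi2],xi3),
   where xi_j = pibar(alpha_{p_j}) and omega(xi, pibar beta) = beta(xi) *)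
Definition dterm (x1 x2 : Vf) (p3 : P) : P :=
  actF x1 (alpha p3 x2) - alpha p3 (brk x1 x2).

End DiffAlg.

(* Main.v *)
Require Import Defs.
From HB Require Import structures.
From mathcomp Require Import all_boot all_order all_algebra.
From mathcomp Require Import finmap.
From mathcomp.multinomials Require Import monalg.
From mathcomp Require Import ring.
Import GRing.Theory.
Local Open Scope ring_scope.

Set Implicit Arguments.
Unset Strict Implicit.

Lemma addf0 (A : zmodType) (f : A -> A) : (forall a b, f (a + b) = f a + f b) -> f 0 = 0.
Proof.
move=> H; have := H 0 0; rewrite addr0 => E.
have : f 0 + f 0 - f 0 = f 0 - f 0 by rewrite -E.
by rewrite addrK subrr.
Qed.

Section Abs.
Variable (R : comRingType) (A : comAlgType R).
Variables (D : A -> A).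
Hypothesis DD : forall a b, D (a + b) = D a + D b.
Hypothesis DZ : forall (c : R) a, D (c *: a) = c *: D a.

Lemma absA K E x y : D (K * x) = E * x + K * D x -> D (K * y) = E * y + K * D y ->
  D (K * (x + y)) = E * (x + y) + K * D (x + y).
Proof. by move=> Hx Hy; rewrite mulrDr DD Hx Hy DD; ring. Qed.

Lemma absZ K E (c : R) x : D (K * x) = E * x + K * D x ->
  D (K * (c *: x)) = E * (c *: x) + K * D (c *: x).
Proof. by rewrite -scalerAr !DZ => ->; rewrite scalerDr -!scalerAr. Qed.

Lemma absMA x1 x2 : (forall y, D (x1 * y) = D x1 * y + x1 * D y) ->
  (forall y, D (x2 * y) = D x2 * y + x2 * D y) ->
  forall y, D ((x1 + x2) * y) = D (x1 + x2) * y + (x1 + x2) * D y.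
Proof. by move=> H1 H2 y; rewrite mulrDl DD H1 H2 DD; ring. Qed.

Lemma absMZ (c : R) x : (forall y, D (x * y) = D x * y + x * D y) ->
  forall y, D ((c *: x) * y) = D (c *: x) * y + (c *: x) * D y.
Proof. by move=> H y; rewrite -scalerAl !DZ H scalerDr -!scalerAl. Qed.

Lemma absM1 : D 1 = 0 -> forall y, D (1 * y) = D 1 * y + 1 * D y.
Proof. by move=> H y; rewrite H mul0r add0r !mul1r. Qed.

Lemma absMK K E x : (forall y, D (K * y) = E * y + K * D y) ->
  (forall y, D (x * y) = D x * y + x * D y) ->
  forall y, D ((K * x) * y) = D (K * x) * y + (K * x) * D y.
Proof. by move=> HK H y; rewrite -mulrA !HK H; ring. Qed.

End Abs.

Section AbsC.
Variable (R : comRingType) (A : comAlgType R).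
Variables (D d : A -> A).
Hypothesis DD : forall a b, D (a + b) = D a + D b.
Hypothesis DZ : forall (c : R) a, D (c *: a) = c *: D a.
Hypothesis DM : forall a b, D (a * b) = D a * b + a * D b.
Hypothesis dD : forall a b, d (a + b) = d a + d b.
Hypothesis dZ : forall (c : R) a, d (c *: a) = c *: d a.
Hypothesis dM : forall a b, d (a * b) = d a * b + a * d b.

Lemma absCA x y : d (D x) = D (d x) -> d (D y) = D (d y) -> d (D (x + y)) = D (d (x + y)).
Proof. by move=> Hx Hy; rewrite !DD !dD Hx Hy. Qed.

Lemma absCZ (c : R) x : d (D x) = D (d x) -> d (D (c *: x)) = D (d (c *: x)).
Proof. by move=> Hx; rewrite DZ dZ Hx dZ DZ. Qed.

Lemma absC1 : D 1 = 0 -> d 1 = 0 -> d (D 1) = D (d 1).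
Proof.
move=> H1 H2; rewrite H1 H2.
by rewrite (addf0 DD) (addf0 dD).
Qed.

Lemma absCK K x : d (D K) = D (d K) -> d (D x) = D (d x) -> d (D (K * x)) = D (d (K * x)).
Proof. by move=> HK Hx; rewrite DM dD !dM HK Hx DD !DM; ring. Qed.
End AbsC.

Section Exch.
Variable (R : comRingType) (A : comAlgType R).

Lemma sum_ind_exch (s : seq nat) (X e : nat -> A) N : (forall j, j \in s -> (j < N)%N) ->
  \sum_(j <- s) X j * e j = \sum_(i < N) e i * \sum_(j <- s) X j * (j == i)%:R.
Proof.
move=> Hs.
under [RHS]eq_bigr => i _ do rewrite mulr_sumr.
rewrite exchange_big /=; apply: eq_big_seq => j Hj.
rewrite (bigD1 (Ordinal (Hs j Hj))) //= eqxx mulr1 big1 ?addr0; first by rewrite mulrC.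
move=> i Hi; have -> : (j == i) = false.
  by apply/negbTE; apply: contra Hi => /eqP Hji; apply/eqP/val_inj; rewrite /= Hji.
by rewrite mulr0 mulr0.
Qed.

Lemma sum_scale_exch (T : eqType) (S : seq T) (c : T -> R) (F0 : T -> A) (F : nat -> T -> A) N (e : nat -> A) :
  (forall m, m \in S -> F0 m = \sum_(i < N) e i * F i m) ->
  \sum_(m <- S) c m *: F0 m = \sum_(i < N) e i * \sum_(m <- S) c m *: F i m.
Proof.
move=> H.
under [RHS]eq_bigr => i _ do rewrite mulr_sumr.
rewrite exchange_big /=; apply: eq_big_seq => m Hm.
by rewrite H // scaler_sumr; apply: eq_bigr => i _; rewrite scalerAr.
Qed.
End Exch.

Section Tot.
Variable (A : comRingType).
Variables (D : A -> A).
Hypothesis DD : forall a b, D (a + b) = D a + D b.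
Hypothesis DN : forall a, D (- a) = - D a.
Hypothesis DM : forall a b, D (a * b) = D a * b + a * D b.

Definition tot (x : A) := exists h, x = D h.

Lemma tot0 : tot 0.
Proof. by exists 0; rewrite (addf0 DD). Qed.

Lemma totD x y : tot x -> tot y -> tot (x + y).
Proof. by move=> [h1 ->] [h2 ->]; exists (h1 + h2); rewrite DD. Qed.

Lemma totN x : tot x -> tot (- x).
Proof. by move=> [h ->]; exists (- h); rewrite DN. Qed.

Lemma totB x y : tot x -> tot y -> tot (x - y).
Proof. by move=> Hx Hy; apply: totD => //; apply: totN. Qed.

Lemma tot_sum (I : Type) (r : seq I) (F : I -> A) : (forall i, tot (F i)) -> tot (\sum_(i <- r) F i).
Proof. move=> H; elim/big_ind: _ => //; [exact: tot0 | exact: totD]. Qed.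

Lemma ibp i a b : tot (iter i D a * b - a * iter i (fun h => - D h) b).
Proof.
elim: i b => [|i IH] b; first by rewrite /= subrr; exact: tot0.
have [h Hh] := IH (- D b).
exists (iter i D a * b + h).
rewrite [iter i.+1 (fun h => - D h) b]iterSr iterS DD -Hh DM; ring.
Qed.

Lemma vard_abs N (a : A) (F : nat -> A) :
  exists h, \sum_(i < N) iter i D a * F i - a * \sum_(i < N) iter i (fun h => - D h) (F i) = D h.
Proof.
have : tot (\sum_(i < N) (iter i D a * F i - a * iter i (fun h => - D h) (F i))).
  by apply: tot_sum => i; apply: ibp.
by rewrite sumrB mulr_sumr => -[h ->]; exists h.
Qed.
End Tot.


Section Main.
Variable (A : comRingType).
Variables (D : A -> A) (k : A).
Hypothesis DD : forall a b, D (a + b) = D a + D b.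
Hypothesis DN : forall a, D (- a) = - D a.
Hypothesis DM : forall a b, D (a * b) = D a * b + a * D b.

Definition mk p p1 := D (D (D p)) + D k * p1 + k ^+ 2 * D p.

Lemma DB a b : D (a - b) = D a - D b.
Proof. by rewrite DD DN. Qed.

Lemma p1_abs p p1 : D p1 = k * D p ->
  D (D (D p) + k * p1) - k * (D p1 - k * D p) = D (D (D p)) + D k * p1 + k ^+ 2 * D p.
Proof. by move=> H; rewrite DD DM H; ring. Qed.

Lemma rho_abs p p1 : D p1 = k * D p -> D p1 - k * D p = 0.
Proof. by move=> ->; rewrite subrr. Qed.

Lemma skew_abs p p1 q q1 X Y : D p1 = k * D p -> D q1 = k * D q ->
  X = mk p p1 -> Y = mk q q1 -> exists h, X * q + Y * p = D h.
Proof.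
move=> Hp Hq -> ->.
exists (D (D p) * q - D p * D q + p * D (D q) + k * p1 * q + k * q1 * p - p1 * q1).
rewrite /mk !DD !DN !DM Hp Hq; ring.
Qed.

Section Br.
Variables (dV dW : A -> A).
Hypothesis dVD : forall a b, dV (a + b) = dV a + dV b.
Hypothesis dVN : forall a, dV (- a) = - dV a.
Hypothesis dVM : forall a b, dV (a * b) = dV a * b + a * dV b.
Hypothesis dVC : forall a, dV (D a) = D (dV a).
Hypothesis dWD : forall a b, dW (a + b) = dW a + dW b.
Hypothesis dWN : forall a, dW (- a) = - dW a.
Hypothesis dWM : forall a b, dW (a * b) = dW a * b + a * dW b.
Hypothesis dWC : forall a, dW (D a) = D (dW a).

Lemma br2_abs p p1 q q1 : D p1 = k * D p -> D q1 = k * D q ->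
  dV (D q) + q1 * (D (D p) + k * p1) - (dW (D p) + p1 * (D (D q) + k * q1))
  = D (dV q - dW p + q1 * D p - p1 * D q).
Proof. by move=> Hp Hq; rewrite dVC dWC !DD !DN !DM Hp Hq; ring. Qed.

Lemma br1_abs p p1 q q1 : D p1 = k * D p -> D q1 = k * D q ->
  dV k = mk p p1 -> dW k = mk q q1 ->
  D ((dV q1 - D q * (D (D p) + k * p1)) - (dW p1 - D p * (D (D q) + k * q1)))
  = k * D (dV q - dW p + q1 * D p - p1 * D q).
Proof.
move=> Hp Hq HV HW.
have EV : D (dV q1) = mk p p1 * D q + k * D (dV q) by rewrite -dVC Hq dVM HV dVC.
have EW : D (dW p1) = mk q q1 * D p + k * D (dW p) by rewrite -dWC Hp dWM HW dWC.
rewrite !(DD, DN) EV EW /mk !(DD, DN, DM) Hp Hq; ring.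
Qed.
End Br.


Section Dw.
Variables (d1 d2 d3 : A -> A) (p1 p2 p3 q1 q2 q3 : A).
Hypothesis d1D : forall a b, d1 (a + b) = d1 a + d1 b.
Hypothesis d1N : forall a, d1 (- a) = - d1 a.
Hypothesis d1M : forall a b, d1 (a * b) = d1 a * b + a * d1 b.
Hypothesis d1C : forall a, d1 (D a) = D (d1 a).
Hypothesis d2D : forall a b, d2 (a + b) = d2 a + d2 b.
Hypothesis d2N : forall a, d2 (- a) = - d2 a.
Hypothesis d2M : forall a b, d2 (a * b) = d2 a * b + a * d2 b.
Hypothesis d2C : forall a, d2 (D a) = D (d2 a).
Hypothesis d3D : forall a b, d3 (a + b) = d3 a + d3 b.
Hypothesis d3N : forall a, d3 (- a) = - d3 a.
Hypothesis d3M : forall a b, d3 (a * b) = d3 a * b + a * d3 b.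
Hypothesis d3C : forall a, d3 (D a) = D (d3 a).
Hypothesis H1 : D q1 = k * D p1.
Hypothesis H2 : D q2 = k * D p2.
Hypothesis H3 : D q3 = k * D p3.
Hypothesis d1k : d1 k = mk p1 q1.
Hypothesis d2k : d2 k = mk p2 q2.
Hypothesis d3k : d3 k = mk p3 q3.

Definition G (di : A -> A) (pi pj pl qi qj ql : A) :=
  let Y := di pj in let s := di qj in
  D (D Y) * pl - D Y * D pl + Y * D (D pl)
  + (k * s * pl + k * ql * Y - s * ql)
  + mk pi qi * qj * pl
  + ((k * qi * (D pj * ql - qj * D pl) + ql * (D (D pi) * D pj - D pi * D (D pj)))
   + (k * qi * (D pj * ql - qj * D pl) + ql * (D (D pi) * D pj - D pi * D (D pj)))).

Lemma dw_abs :
  exists h,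
    (d1 (mk p2 q2 * p3) + mk p3 q3 * (d1 p2 - d2 p1 + q2 * D p1 - q1 * D p2))
  + (d2 (mk p3 q3 * p1) + mk p1 q1 * (d2 p3 - d3 p2 + q3 * D p2 - q2 * D p3))
  + (d3 (mk p1 q1 * p2) + mk p2 q2 * (d3 p1 - d1 p3 + q1 * D p3 - q3 * D p1))
  = D h.
Proof.
have E12 : D (d1 q2) = mk p1 q1 * D p2 + k * D (d1 p2) by rewrite -d1C H2 d1M d1k d1C.
have E23 : D (d2 q3) = mk p2 q2 * D p3 + k * D (d2 p3) by rewrite -d2C H3 d2M d2k d2C.
have E31 : D (d3 q1) = mk p3 q3 * D p1 + k * D (d3 p1) by rewrite -d3C H1 d3M d3k d3C.
exists (G d1 p1 p2 p3 q1 q2 q3 + G d2 p2 p3 p1 q2 q3 q1 + G d3 p3 p1 p2 q3 q1 q2).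
rewrite /G /mk !expr2.
rewrite !(d1D, d1N, d1M, d1C) !(d2D, d2N, d2M, d2C) !(d3D, d3N, d3M, d3C) d1k d2k d3k.
rewrite /mk !expr2.
rewrite !(DD, DN, DM) ?E12 ?E23 ?E31 /mk ?expr2 ?(DD, DN, DM) ?H1 ?H2 ?H3.
ring.
Qed.
End Dw.

Lemma comb_abs (E a V Z Yr : A) : (exists h, E - a * V = D h) -> (exists h, Z + Yr = D h) ->
  exists h, a * V - Z - (E + Yr) = D h.
Proof. by move=> [h1 H1] [h2 H2]; exists (- h1 - h2); rewrite DB DN -H1 -H2; ring. Qed.

Lemma comb3 (x1 x2 x3 T1 T2 T3 : A) : (exists h, x1 - T1 = D h) -> (exists h, x2 - T2 = D h) ->
  (exists h, x3 - T3 = D h) -> (exists h, T1 + T2 + T3 = D h) -> exists h, x1 + x2 + x3 = D h.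
Proof.
by move=> [h1 H1] [h2 H2] [h3 H3] [h4 H4]; exists (h1 + h2 + h3 + h4); rewrite !DD -H1 -H2 -H3 -H4; ring.
Qed.

Lemma tr3 (E E' a a' V V' : A) : E = E' -> a = a' -> V = V' ->
  (exists h, E' - a' * V' = D h) -> exists h, E - a * V = D h.
Proof. by move=> -> -> ->. Qed.

Lemma lin_abs (R : comRingType) (B : comAlgType R) (Dl : B -> B) (kl : B)
  (DlD : forall a b, Dl (a + b) = Dl a + Dl b) (DlZ : forall (c : R) a, Dl (c *: a) = c *: Dl a)
  (p p1 q q1 : B) (c : R) : Dl p1 = kl * Dl p -> Dl q1 = kl * Dl q ->
  Dl (p1 + c *: q1) = kl * Dl (p + c *: q).
Proof. by move=> Hp Hq; rewrite !DlD !DlZ Hp Hq mulrDr scalerAr. Qed.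

Lemma lin2_abs (R : comRingType) (B : comAlgType R) (Dl : B -> B)
  (DlD : forall a b, Dl (a + b) = Dl a + Dl b) (DlZ : forall (c : R) a, Dl (c *: a) = c *: Dl a)
  (p q : B) (c : R) : Dl p + c *: Dl q = Dl (p + c *: q).
Proof. by rewrite DlD DlZ. Qed.
End Main.


Section Infra.
Variable R : realFieldType.
Local Notation PP := (P R).

Fact mon_key : unit. Proof. by []. Qed.
Definition mon (m : cmonom nat) : PP := locked_with mon_key (<< m >>).
Lemma monE m : << m >> = mon m.
Proof. by rewrite /mon unlock. Qed.

Definition dm (e : nat -> PP) (m : cmonom nat) : PP :=
  \sum_(i <- finsupp (cmonom_val m))
        ((cmonom_val m i)%:R * mon (divcm m (ucm i)) * e i).

Lemma derE e p : der e p = \sum_(m <- msupp p) p@_m *: dm e m.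
Proof.
rewrite /der; apply: eq_bigr => m _; rewrite /dm.
apply: (congr1 (fun x => p@_m *: x)); apply: eq_bigr => i _.
by rewrite monE.
Qed.

Lemma derEw e (d : {fset _}) p : (msupp p `<=` d)%fset ->
  der e p = \sum_(m <- d) p@_m *: dm e m.
Proof.
move=> H; rewrite derE (big_fset_incl _ H) // => m _.
by rewrite -mcoeff_eq0 => /eqP ->; rewrite scale0r.
Qed.

Lemma dmEw e m (d : {fset nat}) : (finsupp (cmonom_val m) `<=` d)%fset ->
  dm e m = \sum_(i <- d) ((cmonom_val m i)%:R * mon (divcm m (ucm i)) * e i).
Proof.
move=> H; rewrite /dm (big_fset_incl _ H) // => i _ Hi.
by move: Hi; rewrite -cmE_eq0 => /eqP ->; rewrite mul0r mul0r.
Qed.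

Lemma derD (e : nat -> PP) : {morph der e : x y / x + y}.
Proof.
move=> x y.
have Hx : (msupp x `<=` msupp x `|` msupp y `|` msupp (x + y))%fset.
  by rewrite -fsetUA fsubsetUl.
have Hy : (msupp y `<=` msupp x `|` msupp y `|` msupp (x + y))%fset.
  by rewrite -fsetUA fsetUC -fsetUA fsubsetUl.
have Hxy : (msupp (x + y) `<=` msupp x `|` msupp y `|` msupp (x + y))%fset.
  by rewrite fsubsetUr.
rewrite (derEw _ Hx) (derEw _ Hy) (derEw _ Hxy) -big_split /=.
by apply: eq_bigr => m _; rewrite mcoeffD scalerDl.
Qed.

Lemma derZ (e : nat -> PP) (c : R) : {morph der e : x / c *: x}.
Proof.
move=> x.
rewrite (derEw _ (msuppZ_le c x)) derE scaler_sumr.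
by apply: eq_bigr => m _; rewrite mcoeffZ scalerA.
Qed.

Lemma der0 (e : nat -> PP) : der e 0 = 0.
Proof. by rewrite derE msupp0 big_nil. Qed.

Lemma derN (e : nat -> PP) (x : PP) : der e (- x) = - der e x.
Proof. by rewrite -scaleN1r derZ scaleN1r. Qed.

Lemma derB (e : nat -> PP) (x y : PP) : der e (x - y) = der e x - der e y.
Proof. by rewrite derD derN. Qed.

Lemma mon_scale (c : R) m : << c *g m >> = c *: mon m.
Proof.
rewrite -monE; apply/malgP => k; rewrite mcoeffZ.
apply: (etrans (mcoeffU m c k)); apply: esym.
apply: (etrans (congr1 (fun x => c * x) (mcoeffU m 1 k))).
by rewrite mulr_natr.
Qed.

Lemma der_mon e m : der e (mon m) = dm e m.
Proof. by rewrite -monE derE msuppU1 big_seq_fset1 mcoeffUU scale1r. Qed.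

Lemma kvM i m : kv R i * mon m = mon (mmul (ucm i) m).
Proof. by rewrite -!monE /kv malgM_def fgmulUU mulr1. Qed.

Lemma kvE i : kv R i = mon (ucm i).
Proof. by rewrite -monE. Qed.

Lemma one_mon : 1 = mon mone.
Proof. by rewrite -monE; apply/malgP => k; rewrite mcoeff1 ?mcoeffU1. Qed.

Lemma cm_a i (m : cmonom nat) : divcm (mmul (ucm i) m) (ucm i) = m.
Proof. by apply/eqP/cmP => k; rewrite divcmE cmM cmU addKn. Qed.

Lemma cm_b i j (m : cmonom nat) : (0 < m j)%N ->
  divcm (mmul (ucm i) m) (ucm j) = mmul (ucm i) (divcm m (ucm j)).
Proof.
move=> H; apply/eqP/cmP => k; rewrite divcmE !cmM divcmE !cmU.
case: (eqVneq j k) => [<-|_] /=; last by rewrite !subn0.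
by rewrite addnBA.
Qed.

Lemma zz (a b : PP) : 0 * a = 0 * b.
Proof. by rewrite !mul0r. Qed.
Lemma zz2 (a b c : PP) : 0 * a = c * (0 * b).
Proof. by rewrite !mul0r mulr0. Qed.
Lemma fin4 (a z c w b x y e : PP) : a * z = c * w -> b = x * y -> a * z * e + b * e = c * (w * e) + x * (y * e).
Proof. by move=> H ->; rewrite !mulrA H. Qed.

Lemma dm_term e i (m : cmonom nat) j :
  (cmonom_val (mmul (ucm i) m) j)%:R * mon (divcm (mmul (ucm i) m) (ucm j)) * e j
  = (i == j)%:R * (mon m * e j) + kv R i * ((cmonom_val m j)%:R * mon (divcm m (ucm j)) * e j) :> PP.
Proof.
rewrite cmM cmU natrD mulrDl mulrDl.
apply: fin4.
  case: (eqVneq i j) => [<-|_]; last by rewrite mulr0n; apply: zz.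
  by rewrite cm_a.
case: (posnP (m j)) => [->|Hj]; first by rewrite mulr0n; apply: zz2.
by rewrite (cm_b _ Hj) -kvM mulrCA.
Qed.

Lemma ind_sum (i : nat) (F : nat -> PP) (d : {fset nat}) : i \in d ->
  \sum_(j <- d) (i == j)%:R * F j = F i.
Proof.
move=> Hi; rewrite (big_fsetD1 i Hi) /= eqxx mul1r big1_fset ?addr0 //.
by move=> j; rewrite in_fsetD1 => /andP [/negbTE Hj _] _; rewrite eq_sym Hj mul0r.
Qed.

Lemma add2 (S1 S2 A B : PP) : S1 = A -> S2 = B -> S1 + S2 = A + B.
Proof. by move=> -> ->. Qed.

Lemma dm_kvM e i (m : cmonom nat) :
  dm e (mmul (ucm i) m) = e i * mon m + kv R i * dm e m.
Proof.
rewrite [dm e (mmul _ _)]/dm mdomD mdomU.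
under eq_bigr => j _ do rewrite dm_term.
rewrite big_split /=; apply: add2.
  rewrite ind_sum; first by rewrite mulrC.
  by rewrite in_fsetU in_fset1 eqxx.
rewrite (dmEw e (fsubsetUr [fset i]%fset (finsupp (cmonom_val m)))) mulr_sumr.
reflexivity.
Qed.

Lemma P_lin (Q : PP -> Prop) :
  (forall x y, Q x -> Q y -> Q (x + y)) -> (forall (c : R) x, Q x -> Q (c *: x)) ->
  (forall m, Q (mon m)) -> forall p, Q p.
Proof.
move=> HD HZ Hm p; rewrite (monalgE p).
have Q0 : Q 0.
  have := HZ 0 _ (Hm mone). by rewrite scale0r.
elim/big_ind: _ => //.
move=> m _; rewrite mon_scale; apply: HZ; apply: Hm.
Qed.
Lemma P_ind (Q : PP -> Prop) :
  (forall x y, Q x -> Q y -> Q (x + y)) -> (forall (c : R) x, Q x -> Q (c *: x)) ->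
  Q 1 -> (forall i x, Q x -> Q (kv R i * x)) -> forall p, Q p.
Proof.
move=> HD HZ H1 Hk; apply: P_lin => //.
have Hm : forall n (m : cmonom nat), (mdeg m < n)%N -> Q (mon m).
  elim=> [//|n IH] m Hm.
  case: (posnP (mdeg m)) => [/eqP|Hpos].
    rewrite mdeg_eq0 => /eqP ->. rewrite -one_mon. exact: H1.
  have : finsupp (cmonom_val m) != fset0.
    apply/negP => /eqP H; move: Hpos; by rewrite mdegE H big_nil.
  case/fset0Pn => i Hi.
  have Hmi : (0 < m i)%N by rewrite lt0n cmE_neq0.
  have Em : m = mmul (ucm i) (divcm m (ucm i)).
    apply/eqP/cmP => k; rewrite cmM divcmE cmU.
    case: (eqVneq i k) => [<-|_]. by rewrite subnKC. by rewrite add0n subn0.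
  have Hd : (mdeg (divcm m (ucm i)) < n)%N.
    move: Hm; rewrite {1}Em mdegM mdegU; by rewrite add1n ltnS.
  rewrite Em -kvM; apply: Hk; exact: IH.
move=> m; exact: (Hm (mdeg m).+1).
Qed.

Lemma der_kv (e : nat -> PP) i : der e (kv R i) = e i.
Proof.
rewrite kvE der_mon /dm mdomU big_seq_fset1 cmUU.
have -> : divcm (ucm i) (ucm i) = mone.
  by apply/eqP/cmP => k; rewrite divcmE subnn cm1.
by rewrite -one_mon mul1r mul1r.
Qed.

Lemma der1 (e : nat -> PP) : der e 1 = 0.
Proof. by rewrite one_mon der_mon /dm mdom1 big_nil. Qed.

Lemma der_kvM (e : nat -> PP) i x : der e (kv R i * x) = e i * x + kv R i * der e x.
Proof.
elim/P_lin: x.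
- move=> x y. exact: (absA (derD e)).
- move=> c x. exact: (absZ (derZ e)).
- move=> m. rewrite kvM.
apply: etrans (der_mon e _) _.
rewrite (der_mon e m).
exact: dm_kvM.
Qed.


Lemma derM (e : nat -> PP) (x y : PP) : der e (x * y) = der e x * y + x * der e y.
Proof.
move: x y; elim/P_ind.
- move=> x1 x2. exact: (absMA (derD e)).
- move=> c x. exact: (absMZ (derZ e)).
- exact: (absM1 (der1 e)).
- move=> i x. exact: (absMK (der_kvM e i)).
Qed.

Lemma der_ext (e e' : nat -> PP) p : (forall i, e i = e' i) -> der e p = der e' p.
Proof.
move=> H; rewrite /der; apply: eq_bigr => m _.
apply: (congr1 (fun x => p@_m *: x)); apply: eq_bigr => i _.
by rewrite H.
Qed.

Lemma derC (e : nat -> PP) h : (forall i, e i.+1 = Ds (e i)) ->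
  der e (Ds h) = Ds (der e h).
Proof.
move=> He; move: h; elim/P_ind.
- move=> x y; exact: (absCA (derD _) (derD e)).
- move=> c x; exact: (absCZ (derZ _) (derZ e)).
- exact: (absC1 (derD _) (derD e) (der1 _) (der1 e)).
- move=> i x; apply: (absCK (derD _) (derM _) (derD e) (derM e)).
  apply: etrans (congr1 (der e) (der_kv _ i)) _.
  apply: etrans (der_kv e i.+1) _.
  rewrite He; apply: congr1; exact: (esym (der_kv e i)).
Qed.

Lemma ordb_lt (L : PP) m j : m \in msupp L -> j \in finsupp (cmonom_val m) -> (j < ordb L)%N.
Proof.
move=> Hm Hj.
have H1 := @leq_bigmax_seq _ _ xpredT (fun i => i.+1) j Hj isT.
have H2 := @leq_bigmax_seq _ _ xpredT (fun m : cmonom nat => \max_(i <- finsupp (cmonom_val m)) i.+1)%N m Hm isT.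
exact: leq_trans H1 H2.
Qed.

Lemma chain (e : nat -> PP) L : der e L = \sum_(i < ordb L) e i * pder i L.
Proof.
rewrite /pder derE.
under [RHS]eq_bigr => i _ do rewrite derE.
apply: (@sum_scale_exch _ _ _ _ _ _ (fun (i : nat) m => dm (fun j => (j == i)%:R) m)).
move=> m Hm; rewrite /dm.
apply: (@sum_ind_exch _ _ _ (fun j => (cmonom_val m j)%:R * mon (divcm m (ucm j))) e) => j Hj; exact: ordb_lt Hm Hj.
Qed.

Lemma vard_tot (a L : PP) : totder (evder a L - a * vard L).
Proof.
rewrite /evder chain /totder /vard.
have [h Hh] := @vard_abs _ (@Ds R) (derD _) (derM _) (ordb L) a (fun i => pder i L).
exists h; rewrite -Hh. reflexivity.
Qed.

End Infra.
Arguments mon {R} m.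

Section Final.
Variable R : realFieldType.
Local Notation PP := (P R).
Lemma L_rho (p p1 : PP) : inOmega1 p p1 -> rhoV (pibar p p1) = 0.
Proof. move=> H; exact: (rho_abs H). Qed.

Lemma L_VkS (p p1 : PP) : inOmega1 p p1 -> forall i,
  Vk (pibar p p1) i.+1 = Ds (Vk (pibar p p1) i).
Proof.
move=> H i.
change (Vk (pibar p p1) i.+1) with (Ds (Vk (pibar p p1) i) + rhoV (pibar p p1) * kv R i.+1).
rewrite (L_rho H) mul0r addr0; reflexivity.
Qed.

Lemma L_Vk (p p1 : PP) : inOmega1 p p1 -> forall i,
  Vk (pibar p p1) i = iter i (@Ds R) (mKdVop p p1).
Proof.
move=> H; elim=> [|i IH].
  exact: (p1_abs (derD _) (derM _) H).
rewrite (L_VkS H) IH iterS; reflexivity.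
Qed.

Lemma L_act (p p1 : PP) : inOmega1 p p1 -> forall h,
  act (pibar p p1) h = evder (mKdVop p p1) h.
Proof. move=> H h; rewrite /act /evder; apply: der_ext => i; exact: L_Vk. Qed.

Lemma L_actk (p p1 : PP) : inOmega1 p p1 -> act (pibar p p1) (kv R 0) = mKdVop p p1.
Proof. move=> H; rewrite /act der_kv; exact: (L_Vk H 0). Qed.

Lemma L_actC (p p1 : PP) : inOmega1 p p1 -> forall a,
  act (pibar p p1) (Ds a) = Ds (act (pibar p p1) a).
Proof. move=> H a; rewrite /act; exact: derC (L_VkS H). Qed.

Lemma part2 (p p1 q q1 : PP) : inOmega1 p p1 -> inOmega1 q q1 ->
  totder (alpha q (pibar p p1) + alpha p (pibar q q1)).
Proof. move=> Hp Hq; exact: (skew_abs (derD _) (derN _) (derM _) Hp Hq (L_actk Hp) (L_actk Hq)). Qed.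

Lemma part3 (p p1 q q1 : PP) (c : R) : inOmega1 p p1 -> inOmega1 q q1 ->
     exists r r1 : PP, inOmega1 r r1 /\
       (pibar p p1).1 + c *: (pibar q q1).1 = (pibar r r1).1 /\
       (pibar p p1).2 + c *: (pibar q q1).2 = (pibar r r1).2.
Proof.
move=> Hp Hq; exists (p + c *: q), (p1 + c *: q1); split.
  exact: (lin_abs (derD _) (derZ _) c Hp Hq).
split; first reflexivity.
exact: (lin2_abs (derD _) (derZ _) p q c).
Qed.

Lemma part4 (p p1 q q1 : PP) : inOmega1 p p1 -> inOmega1 q q1 ->
  exists r1, inOmega1 (act (pibar p p1) q - act (pibar q q1) p + q1 * Ds p - p1 * Ds q) r1 /\
     brk (pibar p p1) (pibar q q1) = pibar (act (pibar p p1) q - act (pibar q q1) p + q1 * Ds p - p1 * Ds q) r1.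
Proof.
move=> Hp Hq; exists (brk (pibar p p1) (pibar q q1)).1; split.
  exact: (br1_abs (derD _) (derN _) (derM _) (derM _) (L_actC Hp) (derM _) (L_actC Hq) Hp Hq (L_actk Hp) (L_actk Hq)).
apply: injective_projections; first reflexivity.
exact: (br2_abs (derD _) (derN _) (derM _) (L_actC Hp) (L_actC Hq) Hp Hq).
Qed.

Lemma dterm_eq (p p1 q q1 s s1 : PP) : inOmega1 p p1 -> inOmega1 q q1 -> inOmega1 s s1 ->
  totder (dterm (pibar p p1) (pibar q q1) s -
    (act (pibar p p1) (mKdVop q q1 * s) +
     mKdVop s s1 * (act (pibar p p1) q - act (pibar q q1) p + q1 * Ds p - p1 * Ds q))).
Proof.
move=> Hp Hq Hs.
apply: (comb_abs (derD _) (derN _)).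
  apply: (tr3 (L_act Hp _) (L_actk Hp) _ (vard_tot _ _)).
  apply: congr1; exact: (congr1 (fun x => x * s) (L_actk Hq)).
have [r1 [Hr Hb]] := part4 Hp Hq.
rewrite Hb.
exact: (skew_abs (derD _) (derN _) (derM _) Hr Hs (L_actk Hr) (erefl _)).
Qed.

End Final.

Unset Implicit Arguments.

Theorem theorem5p3 (R : realFieldType) :
  (* pibar maps Omega^1 into X_A and Phi(pibar alpha_p) = pi_1(alpha_p) *)
  (forall p p1 : P R, inOmega1 p p1 ->
     inXA (pibar p p1) /\ forall h : P R, act (pibar p p1) h = evder (mKdVop p p1) h) /\
  (* skew-symmetry:  alpha_q(pibar alpha_p) = - alpha_p(pibar alpha_q) in Omega^0 *)
  (forall p p1 q q1 : P R, inOmega1 p p1 -> inOmega1 q q1 ->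
     totder (alpha q (pibar p p1) + alpha p (pibar q q1))) /\
  (* the image pibar Omega^1 is a linear subspace ... *)
  (forall (p p1 q q1 : P R) (c : R), inOmega1 p p1 -> inOmega1 q q1 ->
     exists r r1 : P R, inOmega1 r r1 /\
       (pibar p p1).1 + c *: (pibar q q1).1 = (pibar r r1).1 /\
       (pibar p p1).2 + c *: (pibar q q1).2 = (pibar r r1).2) /\
  (* ... closed under the Lie bracket *)
  (forall p p1 q q1 : P R, inOmega1 p p1 -> inOmega1 q q1 ->
     exists r r1 : P R, inOmega1 r r1 /\ brk (pibar p p1) (pibar q q1) = pibar r r1) /\
  (* d omega = 0 *)
  (forall p1 p11 p2 p21 p3 p31 : P R,
     inOmega1 p1 p11 -> inOmega1 p2 p21 -> inOmega1 p3 p31 ->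
     totder (dterm (pibar p1 p11) (pibar p2 p21) p3
           + dterm (pibar p2 p21) (pibar p3 p31) p1
           + dterm (pibar p3 p31) (pibar p1 p11) p2)).
Proof.
split.
  move=> p p1 H; split; [exact: H | exact: (L_act H)].
split.
  move=> p p1 q q1; exact: part2.
split.
  move=> p p1 q q1 c; exact: part3.
split.
  move=> p p1 q q1 Hp Hq.
  have [r1 [Hr Hb]] := part4 Hp Hq.
  eexists; exists r1; split; [exact: Hr | exact: Hb].
move=> p1 p11 p2 p21 p3 p31 H1 H2 H3.
apply: (comb3 (derD _) (dterm_eq H1 H2 H3) (dterm_eq H2 H3 H1) (dterm_eq H3 H1 H2)).
exact: (dw_abs (derD _) (derN _) (derM _) (derD _) (derM _) (L_actC H1)
   (derD _) (derM _) (L_actC H2) (derD _) (derM _) (L_actC H3) H1 H2 H3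
   (L_actk H1) (L_actk H2) (L_actk H3)).
Qed.
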